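(* For contexts $\Gamma,\Theta,\Delta$ and formulas $A,B$: if $\Theta\vdash A$ has a focused derivation and $\Gamma,A,\Delta\vdash B$ has a focused derivation, then $\Gamma,\Theta,\Delta\vdash B$ has a focused derivation.
   Context: Formulas are built from atoms ($p,q,\dots$) by a binary product: every formula is an atom or $A\bullet B$. A context is a finite (possibly empty) list of formulas; commas denote concatenation. A context is irreducible if its leftmost formula is not a product (it is empty or begins with an atom). A focused derivation of a sequent is a finite derivation tree with no undischarged premises using only the rules: ($\bullet L$): from $A,B,\Delta\vdash C$ infer $A\bullet B,\Delta\vdash C$; ($\bullet R^{foc}$): from $\Gamma\vdash A$ and $\Delta\vdash B$ infer $\Gamma,\Delta\vdash A\bullet B$, where $\Gamma$ is irreducible; and ($id^{atm}$): $p\vdash p$ for atoms $p$. *)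

(* Defs.v *)
From Stdlib Require Import List.
Import ListNotations.

Inductive formula : Type :=
| At : nat -> formula
| Prod : formula -> formula -> formula.

(* A context is a finite list of formulas; commas = list concatenation. *)
Definition context := list formula.

Definition irreducible (G : context) : Prop :=
  match G with
  | [] => True
  | At _ :: _ => True
  | Prod _ _ :: _ => False
  end.

Inductive foc : context -> formula -> Prop :=
| foc_prodL : forall A B D C,
    foc (A :: B :: D) C -> foc (Prod A B :: D) C
| foc_prodR : forall G D A B,
    irreducible G -> foc G A -> foc D B -> foc (G ++ D) (Prod A B)
| foc_id : forall p, foc [At p] (At p).

(* Main.v *)
Require Import Defs.
From Stdlib Require Import List.
Import ListNotations.

Lemma foc_atom_inv : forall T p, foc T (At p) -> T = [At p].
Proof.
  intros T p H. remember (At p) as C eqn:HC. revert HC.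
  induction H; intros HC.
  - specialize (IHfoc HC). discriminate.
  - discriminate.
  - inversion HC; subst; reflexivity.
Qed.

Lemma irr_cons : forall g x y, irreducible (g :: x) -> irreducible (g :: y).
Proof. intros g x y H. destruct g; simpl in *; auto. Qed.

Lemma cut_gen : forall A Theta Gamma Delta B,
  foc Theta A -> foc (Gamma ++ A :: Delta) B -> foc (Gamma ++ Theta ++ Delta) B.
Proof.
  induction A as [p | X IHX Y IHY].
  - intros Theta Gamma Delta B HT H. apply foc_atom_inv in HT. subst. exact H.
  - intros Theta Gamma Delta B HT H.
    remember (Gamma ++ Prod X Y :: Delta) as L eqn:HL. revert Gamma Delta HL.
    induction H as [a b D C H IH | G D a b Hirr H1 IH1 H2 IH2 | p];
      intros Gamma' Delta' HL.
    + destruct Gamma' as [|f Gamma'].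
      * simpl in HL. inversion HL; subst. simpl.
        clear IH HL.
        remember (Prod X Y) as P eqn:HP. revert HP.
        induction HT as [a' b' D' C' HT IHT | G D a' b' Hirr H1 IH1 H2 IH2 | q];
          intros HP.
        -- simpl. apply foc_prodL. apply (IHT HP).
        -- inversion HP; subst.
           assert (E : foc ([X] ++ D ++ Delta') C).
           { apply IHY with (Theta := D) (Gamma := [X]); assumption. }
           assert (E2 : foc ([] ++ G ++ (D ++ Delta')) C).
           { apply IHX; simpl; assumption. }
           simpl in E2. rewrite ?app_assoc in *. rewrite <- ?app_assoc in *. exact E2.
        -- discriminate.
      * inversion HL; subst. simpl. apply foc_prodL.
        apply (IH (a :: b :: Gamma') Delta'). reflexivity.
    + destruct (app_eq_app _ _ _ _ HL) as [l [[E1 E2] | [E1 E2]]].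
      * destruct l as [|f l'].
        -- simpl in E1. rewrite app_nil_r in E1. subst.
           apply foc_prodR; auto. apply (IH2 [] Delta'). simpl. symmetry; assumption.
        -- inversion E2; subst.
           destruct Gamma' as [|g Gamma''].
           ++ simpl in Hirr. contradiction.
           ++ replace ((g :: Gamma'') ++ Theta ++ l' ++ D)
                with (((g :: Gamma'') ++ Theta ++ l') ++ D)
                by (repeat rewrite <- app_assoc; reflexivity).
              apply foc_prodR.
              ** simpl. eapply irr_cons. exact Hirr.
              ** apply (IH1 (g :: Gamma'') l').
                 repeat rewrite <- app_assoc. reflexivity.
              ** exact H2.
      * subst. rewrite <- app_assoc. apply foc_prodR; auto.
    + destruct Gamma' as [|g Gamma'']; simpl in HL; inversion HL.
      destruct Gamma''; discriminate.
Unshelve. all: exact []. Qed.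

Theorem lemma1p14 (Gamma Theta Delta : context) (A B : formula) :
  foc Theta A -> foc (Gamma ++ A :: Delta) B -> foc (Gamma ++ Theta ++ Delta) B.
Proof. apply cut_gen. Qed.
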